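(* Let $\mathcal{P}$ be a finite poset, let $\mathcal{A},\mathcal{B}$ be families of downsets of $\mathcal{P}$, and let $p\in\mathcal{P}$. Define $\mathcal{A}^p_1=\{A\setminus{\downarrow}p: A\in\mathcal{A}\}$, $\mathcal{B}^p_1=\{B\setminus{\downarrow}p: B\in\mathcal{B},\ p\in B\}$, $\mathcal{A}^p_2=\{A: A\in\mathcal{A},\ p\notin A\}$, $\mathcal{B}^p_2=\{B\setminus{\uparrow}p: B\in\mathcal{B}\}$. Then $\mathcal{A}$ and $\mathcal{B}$ are dual over $\mathcal{L}(\mathcal{P})$ if and only if $\mathcal{A}^p_1$ and $\mathcal{B}^p_1$ are dual over $\mathcal{L}(\mathcal{P}\setminus{\downarrow}p)$ and $\mathcal{A}^p_2$ and $\mathcal{B}^p_2$ are dual over $\mathcal{L}(\mathcal{P}\setminus{\uparrow}p)$.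
   Context: For a finite poset $\mathcal{P}$, $\mathcal{L}(\mathcal{P})$ denotes the distributive lattice of all downsets (order ideals) of $\mathcal{P}$ ordered by inclusion; subsets $\mathcal{P}\setminus{\downarrow}p$ and $\mathcal{P}\setminus{\uparrow}p$ carry the induced order. ${\downarrow}p=\{q\in\mathcal{P}:q\le p\}$ and ${\uparrow}p=\{q\in\mathcal{P}:q\ge p\}$ (both contain $p$). Two families $\mathcal{A},\mathcal{B}$ of downsets of $\mathcal{P}$ are dual over $\mathcal{L}(\mathcal{P})$ if $A\not\subseteq B$ for all $A\in\mathcal{A},B\in\mathcal{B}$ (property ( * )), and for every downset $X$ of $\mathcal{P}$ either $X\subseteq B$ for some $B\in\mathcal{B}$ or $A\subseteq X$ for some $A\in\mathcal{A}$. *)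

(* Defs.v *)
From mathcomp Require Import all_boot all_order.
Set Implicit Arguments. Unset Strict Implicit. Unset Printing Implicit Defensive.
Import Order.TTheory.
Local Open Scope order_scope.

Definition downp {d} {T : finPOrderType d} (p : T) : {set T} := [set q | q <= p].
Definition upp {d} {T : finPOrderType d} (p : T) : {set T} := [set q | p <= q].

Definition downset_in {d} {T : finPOrderType d} (S X : {set T}) : Prop :=
  X \subset S /\ (forall x y : T, x \in X -> y \in S -> y <= x -> y \in X).

Definition dual_over {d} {T : finPOrderType d} (S : {set T})
  (FA FB : {set {set T}}) : Prop :=
  (forall A B, A \in FA -> B \in FB -> ~~ (A \subset B)) /\
  (forall X, downset_in S X ->
     (exists2 B, B \in FB & X \subset B) \/ (exists2 A, A \in FA & A \subset X)).

(* Main.v *)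
Require Import Defs.
From mathcomp Require Import all_boot all_order.
Local Open Scope order_scope.
Import Order.TTheory.

Section H.
Context {d : Order.disp_t} {T : finPOrderType d}.
Implicit Types (p : T) (X A B : {set T}).

Lemma down_sub {p B} : downset_in [set: T] B -> p \in B -> downp p \subset B.
Proof. by case=> _ hB pB; apply/subsetP=> q; rewrite inE => qp; apply: (hB p). Qed.

Lemma up_disj {p B q} : downset_in [set: T] B -> p \notin B -> q \in B -> ~~ (p <= q).
Proof. case=> _ hB pB qB; apply/negP=> pq; by rewrite (hB q p) in pB. Qed.
End H.

Theorem lemma3 (d : Order.disp_t) (T : finPOrderType d)
  (FA FB : {set {set T}}) (p : T)
  (hA : forall A, A \in FA -> downset_in [set: T] A)
  (hB : forall B, B \in FB -> downset_in [set: T] B) :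
  dual_over [set: T] FA FB <->
  (dual_over ([set: T] :\: downp p)
      [set A :\: downp p | A in FA]
      [set B :\: downp p | B in [set B in FB | p \in B]]
   /\
   dual_over ([set: T] :\: upp p)
      [set A in FA | p \notin A]
      [set B :\: upp p | B in FB]).
Proof.
split.
- case=> [h1 h2]; split; split.
  + move=> A' B' /imsetP[A Ain ->] /imsetP[B]; rewrite inE => /andP[Bin pB] ->.
    apply/negP=> sub; move: (h1 A B Ain Bin); apply/negP/negPn.
    apply/subsetP=> q qA; case: (boolP (q \in downp p)) => qD.
      exact: (subsetP (down_sub (hB B Bin) pB) q qD).
    have: q \in A :\: downp p by rewrite inE qD qA.
    by move/(subsetP sub); rewrite inE => /andP[].
  + move=> X [XS hX].
    have dX : downset_in [set: T] (X :|: downp p).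
      split; first exact: subsetT.
      move=> x y; rewrite !inE => /orP[xX|xp] _ yx.
        case: (boolP (y <= p)) => yp; first by rewrite orbT.
        by rewrite (hX x y xX) // !inE yp.
      by rewrite (le_trans yx xp) orbT.
    case: (h2 _ dX) => [[B Bin sub]|[A Ain sub]].
      have pB : p \in B by apply: (subsetP sub); rewrite !inE lexx orbT.
      left; exists (B :\: downp p).
        by apply/imsetP; exists B => //; rewrite inE Bin pB.
      apply/subsetP=> q qX; have := subsetP XS q qX; rewrite !inE => /andP[qD _].
      by rewrite qD (subsetP sub) // inE qX.
    right; exists (A :\: downp p); first by apply/imsetP; exists A.
    apply/subsetP=> q; rewrite inE => /andP[qD qA].
    by have /setUP[//|h] := subsetP sub q qA; rewrite h in qD.
  + move=> A B' ; rewrite inE => /andP[Ain pA] /imsetP[B Bin ->].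
    apply/negP=> sub; move: (h1 A B Ain Bin); apply/negP/negPn.
    apply/(subset_trans sub)/subsetDl.
  + move=> X [XS hX].
    have XU : forall q, q \in X -> ~~ (p <= q).
      by move=> q qX; have := subsetP XS q qX; rewrite !inE andbT.
    have dX : downset_in [set: T] X.
      split; first exact: subsetT.
      move=> x y xX _ yx; have yS : y \in [set: T] :\: upp p.
        rewrite !inE andbT; apply/negP=> py; move: (XU x xX); by rewrite (le_trans py yx).
      exact: (hX x y xX yS yx).
    case: (h2 _ dX) => [[B Bin sub]|[A Ain sub]].
      left; exists (B :\: upp p); first by apply/imsetP; exists B.
      apply/subsetP=> q qX; by rewrite !inE (XU q qX) (subsetP sub).
    right; exists A => //; rewrite inE Ain /=.
    apply/negP=> pA; move: (XU p (subsetP sub p pA)); by rewrite lexx.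
- case=> [[h11 h12] [h21 h22]]; split.
  + move=> A B Ain Bin; apply/negP=> sub.
    case: (boolP (p \in B)) => pB.
      have := h11 (A :\: downp p) (B :\: downp p).
      rewrite (_ : A :\: downp p \in _); last by apply/imsetP; exists A.
      rewrite (_ : B :\: downp p \in _); last by apply/imsetP; exists B; rewrite // inE Bin.
      by move=> /(_ isT isT)/negP; apply; apply: setSD.
    have pA : p \notin A by apply/negP=> /(subsetP sub); apply/negP.
    have := h21 A (B :\: upp p).
    rewrite inE Ain pA (_ : B :\: upp p \in _); last by apply/imsetP; exists B.
    move=> /(_ isT isT)/negP; apply; apply/subsetP=> q qA.
    rewrite !inE (subsetP sub q qA) andbT.
    exact: (up_disj (hB B Bin) pB (subsetP sub q qA)).
  + move=> X dX; case: (boolP (p \in X)) => pX.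
      have DX := down_sub dX pX.
      have dX' : downset_in ([set: T] :\: downp p) (X :\: downp p).
        split; first by apply: setSD; apply: subsetT.
        move=> x y; rewrite !inE => /andP[_ xX] /andP[yD _] yx.
        by rewrite yD (dX.2 x y xX) // inE.
      case: (h12 _ dX') => [[B' /imsetP[B] + -> sub]|[A' /imsetP[A Ain ->] sub]].
        rewrite inE => /andP[Bin pB]; left; exists B => //.
        apply/subsetP=> q qX; case: (boolP (q \in downp p)) => qD.
          exact: (subsetP (down_sub (hB B Bin) pB)).
        have : q \in X :\: downp p by apply/setDP.
        by move/(subsetP sub)/setDP=> [].
      right; exists A => //; apply/subsetP=> q qA.
      case: (boolP (q \in downp p)) => qD; first exact: (subsetP DX).
      have : q \in A :\: downp p by apply/setDP.
      by move/(subsetP sub)/setDP=> [].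
    have XU q : q \in X -> ~~ (p <= q) by apply: up_disj.
    have dX' : downset_in ([set: T] :\: upp p) X.
      split; first by apply/subsetP=> q qX; rewrite !inE (XU q qX).
      move=> x y xX _ yx; have yS : y \in [set: T] by rewrite inE.
      exact: (dX.2 x y xX yS yx).
    case: (h22 _ dX') => [[B' /imsetP[B Bin ->] sub]|[A + sub]].
      by left; exists B => //; apply: (subset_trans sub); apply: subsetDl.
    by rewrite inE => /andP[Ain _]; right; exists A.
Qed.
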